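(* Let $c_1\ge1$. Let $Q^0$ be the initial cube of the construction (so $Q^0\supset\operatorname{supp}\mu$), and suppose there exist cubes $Q_u,Q_d\in\mathcal D$ contained in $Q^0$ such that $c_1^{-1}\ell(Q^0)\le\operatorname{dist}(Q_u,Q_d)\le c_1\ell(Q^0)$ and $\mu(Q_u)\ge c_1^{-1}\mu(Q^0)$, $\mu(Q_d)\ge c_1^{-1}\mu(Q^0)$. Then $$\|\mathcal R\mu\|_{L^2(\mu)}^2\ge C\,\Theta(Q^0)^2\,\mu(Q^0),$$ where $C>0$ depends only on $c_1$, $s$, $d$ and $c_{sep}$.
   Context: $0<s<d$. $E\subset\mathbb R^d$ is a Cantor set built from a compact $Q^0$ by repeatedly choosing, inside each closed ''cube'' $Q$ of generation $k$, a finite nonempty family of closed children (the cubes of generation $k+1$), such that each child $Q'$ of $Q$ satisfies $\frac18\ell(Q)\le\ell(Q')\le\frac13\ell(Q)$, where $\ell(Q)=\operatorname{diam}(Q)$, and distinct children of $Q$ are at distance $\ge c_{sep}\ell(Q)$. $\mathcal D$ is the family of all such cubes. $\mu$ is a finite Borel measure supported on $E$ with $\mu(Q)>0$ for all $Q\in\mathcal D$. $\Theta(Q)=\mu(Q)/\ell(Q)^s$. $\mathcal R\mu(x)=\int\frac{x-y}{|x-y|^{s+1}}\,d\mu(y)$, with $\|\mathcal R\mu\|_{L^2(\mu)}$ understood via truncations $\mathcal R_\varepsilon\mu(x)=\int_{|x-y|>\varepsilon}\frac{x-y}{|x-y|^{s+1}}d\mu(y)$ uniformly in $\varepsilon>0$.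 *)

(* Defs.v *)
From HB Require Import structures.
From mathcomp Require Import all_boot all_order all_algebra.
From mathcomp Require Import all_classical all_reals all_analysis.
Set Implicit Arguments. Unset Strict Implicit. Unset Printing Implicit Defensive.
Import Order.TTheory GRing.Theory Num.Theory.
Import numFieldNormedType.Exports.
Local Open Scope classical_set_scope.
Local Open Scope ring_scope.

Section Defs.
Variables (R : realType) (d : nat).

Definition pt := 'rV[R]_d.

Definition enorm (v : pt) : R := Num.sqrt (\sum_(i < d) (v ord0 i) ^+ 2).
Definition edist (x y : pt) : R := enorm (x - y).

Definition diam (A : set pt) : R :=
  sup [set edist x y | x in A & y in A].
Definition setdist (A B : set pt) : R :=
  inf [set edist x y | x in A & y in B].

Definition Rd := g_sigma_algebraType (@open pt).

(** A Cantor-type construction: [N k] cubes in generation [k], the [j]-th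
    cube of generation [k] is [Q k j] (for [j < N k]); the cube [Q k.+1 j]
    is a child of [Q k (par k j)]. *)
Definition cantor_construction (c_sep : R) (N : nat -> nat)
    (Q : nat -> nat -> set pt) (par : nat -> nat -> nat) : Prop :=
  [/\ N 0%N = 1%N /\ compact (Q 0%N 0%N),
      (forall k j, (j < N k.+1)%N ->
          [/\ (par k j < N k)%N, closed (Q k.+1 j) & Q k.+1 j `<=` Q k (par k j)]),
      (forall k i, (i < N k)%N -> exists j, (j < N k.+1)%N /\ par k j = i),
      (forall k j, (j < N k.+1)%N ->
          diam (Q k (par k j)) / 8 <= diam (Q k.+1 j) <= diam (Q k (par k j)) / 3)
    & (forall k j j', (j < N k.+1)%N -> (j' < N k.+1)%N -> j <> j' ->
          par k j = par k j' ->
          c_sep * diam (Q k (par k j)) <= setdist (Q k.+1 j) (Q k.+1 j'))].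

Definition cantor_set (N : nat -> nat) (Q : nat -> nat -> set pt) : set pt :=
  \bigcap_k \bigcup_(j in [set j | (j < N k)%N]) Q k j.

Definition is_cube (N : nat -> nat) (Q : nat -> nat -> set pt) (A : set pt) :=
  exists k j, (j < N k)%N /\ A = Q k j.

Definition Theta (mu : {finite_measure set Rd -> \bar R}) (s : R) (A : set pt) : R :=
  fine (mu A) / (diam A `^ s).

Definition riesz_trunc (mu : {finite_measure set Rd -> \bar R}) (s eps : R)
    (x : pt) (i : 'I_d) : R :=
  Rintegral mu [set y : Rd | eps < edist x y]
    (fun y : Rd => (x ord0 i - y ord0 i) / (edist x y `^ (s + 1))).

Definition riesz_trunc_L2sq (mu : {finite_measure set Rd -> \bar R}) (s eps : R)
    : \bar R :=
  (\int[mu]_(x in [set: Rd]) (\sum_(i < d) (riesz_trunc mu s eps x i) ^+ 2)%:E)%E.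

Definition riesz_L2sq (mu : {finite_measure set Rd -> \bar R}) (s : R) : \bar R :=
  ereal_sup [set riesz_trunc_L2sq mu s eps | eps in [set e : R | 0 < e]].

End Defs.

(* Main.v *)
Require Import Defs.
From HB Require Import structures.
From mathcomp Require Import all_boot all_order all_algebra.
From mathcomp Require Import all_classical all_reals all_analysis.
Import Order.TTheory GRing.Theory Num.Theory.
Import numFieldNormedType.Exports.
Local Open Scope classical_set_scope.
Local Open Scope ring_scope.
From mathcomp Require Import measurable_realfun.
From mathcomp Require Import ring lra.
Set Implicit Arguments. Unset Strict Implicit. Unset Printing Implicit Defensive.
Section Gen.
Context d0 (T : measurableType d0) (R : realType).

Definition good (f : T -> R) :=
  measurable_fun [set: T] f /\ exists M : R, forall x, `|f x| <= M.

Lemma good_int (mu : {measure set T -> \bar R}) f : (mu setT < +oo)%E ->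
  good f -> mu.-integrable setT (EFin \o f).
Proof.
move=> mfin [mf [M hM]]; apply: measurable_bounded_integrable => //.
exists M; split; first by apply: ger0_real; exact: le_trans (normr_ge0 _) (hM point).
move=> N MN x _ /=; exact: (le_trans (hM x) (ltW MN)).
Qed.

Lemma good_cst c : good (fun=> c).
Proof. by split; [exact: measurable_cst| exists `|c|]. Qed.

Lemma good_add f g : good f -> good g -> good (fun x => f x + g x).
Proof.
move=> [mf [M hM]] [mg [N hN]]; split; first exact: measurable_funD.
by exists (M + N) => x; rewrite (le_trans (ler_normD _ _))// lerD.
Qed.

Lemma good_opp f : good f -> good (fun x => - f x).
Proof.
move=> [mf [M hM]]; split; first exact: measurable_funN.
by exists M => x; rewrite normrN.
Qed.

Lemma good_mul f g : good f -> good g -> good (fun x => f x * g x).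
Proof.
move=> [mf [M hM]] [mg [N hN]]; split; first exact: measurable_funM.
exists (M * N) => x; rewrite normrM ler_pM//.
Qed.

Lemma good_sum n (f : 'I_n -> T -> R) : (forall i, good (f i)) ->
  good (fun x => \sum_(i < n) f i x).
Proof.
move=> hf; elim: n f hf => [|n ih] f hf.
  under [X in good X]funext do rewrite big_ord0; exact: good_cst.
under [X in good X]funext do rewrite big_ord_recr /=.
apply: good_add; last exact: hf.
exact: (ih (fun i => f (widen_ord (leqnSn n) i))).
Qed.

Variable mu : {finite_measure set T -> \bar R}.

Lemma mu_lty : (mu setT < +oo)%E.
Proof. by apply: fin_num_fun_lty; exact: fin_num_measure. Qed.

Lemma RI_sum n (f : 'I_n -> T -> R) : (forall i, good (f i)) ->
  \int[mu]_x (\sum_(i < n) f i x) = \sum_(i < n) \int[mu]_x f i x.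
Proof.
move=> hf; elim: n f hf => [|n ih] f hf.
  under eq_Rintegral do rewrite big_ord0.
  by rewrite big_ord0 Rintegral_cst// mul0r.
under eq_Rintegral do rewrite big_ord_recr /=.
rewrite big_ord_recr /= RintegralD//; last 2 first.
- apply: good_int; first exact: mu_lty.
  by apply: good_sum => i; exact: hf.
- by apply: good_int; [exact: mu_lty|exact: hf].
by rewrite (ih (fun i => f (widen_ord (leqnSn n) i))).
Qed.

Lemma RI_bound f M : good f -> (forall x, `|f x| <= M) ->
  `|\int[mu]_x f x| <= M * fine (mu setT).
Proof.
move=> gf hM; have i : mu.-integrable setT (EFin \o f) by apply: good_int; [exact: mu_lty|exact: gf].
rewrite (le_trans (le_normr_Rintegral _ _))//.
rewrite -Rintegral_cst//; apply: le_Rintegral => //.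
- exact/integrable_norm.
- by apply: good_int; [exact: mu_lty|exact: good_cst].
Qed.

End Gen.

Section Fub.
Context d0 (T : measurableType d0) (R : realType).
Variable mu : {finite_measure set T -> \bar R}.

Lemma good_pair2 (H : T * T -> R) x : good H -> good (fun y => H (x, y)).
Proof.
move=> [mH [M hM]]; split; first exact: measurable_fun_pair2.
by exists M.
Qed.

Lemma good_pair1 (H : T * T -> R) y : good H -> good (fun x => H (x, y)).
Proof.
move=> [mH [M hM]]; split; first exact: measurable_fun_pair1.
by exists M.
Qed.

Lemma prod_lty : ((mu \x mu) setT < +oo)%E.
Proof.
rewrite -setXTT product_measure1E// lte_mul_pinfty//.
  by rewrite fin_num_measure.
exact: mu_lty.
Qed.

Lemma fin_inner (H : T * T -> R) x : good H ->
  (\int[mu]_y (H (x, y))%:E)%E = (\int[mu]_y H (x, y))%:E.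
Proof.
move=> gH; rewrite fineK//; apply: integrable_fin_num => //.
by apply: good_int; [exact: mu_lty|exact: good_pair2].
Qed.

Lemma good_inner (H : T * T -> R) : good H -> good (fun x => \int[mu]_y H (x, y)).
Proof.
move=> gH; have iH : ((mu \x mu)%E).-integrable setT (EFin \o H).
  by apply: good_int; [exact: prod_lty|exact: gH].
split.
  have := measurable_fubini_F iH.
  rewrite /fubini_F => mF.
  apply/measurable_EFinP.
  rewrite (_ : _ \o _ = fun x => \int[mu]_y (EFin \o H) (x, y))%E //.
  by apply/funext => x /=; rewrite fin_inner.
have [_ [M hM]] := gH; exists (M * fine (mu setT)) => x.
by apply: RI_bound => //; exact: good_pair2.
Qed.

Lemma RFubini (H : T * T -> R) : good H ->
  \int[mu]_x \int[mu]_y H (x, y) = \int[mu]_y \int[mu]_x H (x, y).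
Proof.
move=> gH; have iH : ((mu \x mu)%E).-integrable setT (EFin \o H).
  by apply: good_int; [exact: prod_lty|exact: gH].
rewrite /Rintegral; congr fine.
transitivity (\int[mu]_x \int[mu]_y (H (x, y))%:E)%E.
  by apply: eq_integral => x _; rewrite fin_inner.
transitivity (\int[mu]_y \int[mu]_x (H (x, y))%:E)%E.
  exact: (Fubini iH).
apply: eq_integral => y _; rewrite fineK//; apply: integrable_fin_num => //.
by apply: good_int; [exact: mu_lty|exact: good_pair1].
Qed.

End Fub.

Section Geo.
Variables (R : realType) (d : nat).
Local Notation T := (Rd R d).

Lemma open_mRd (A : set (pt R d)) : open A -> measurable (A : set T).
Proof. by move=> oA; apply: sub_sigma_algebra. Qed.

Lemma closed_mRd (A : set (pt R d)) : closed A -> measurable (A : set T).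
Proof.
move=> cA; rewrite -(setCK A); apply: measurableC; apply: open_mRd.
exact: closed_openC.
Qed.

Lemma mcoord (i : 'I_d) : measurable_fun [set: T] (fun x : T => (x : pt R d) ord0 i).
Proof.
apply: (measurability _ (measurable_realfun.RGenOpens.measurableE R)).
move=> _ [_ [a [b ->] <-]]; rewrite setTI; apply: open_mRd.
have := @coord_continuous R 1 d ord0 i.
move/continuousP; apply; exact: interval_open.
Qed.

Lemma edistE (x y : pt R d) :
  Defs.edist x y = Num.sqrt (\sum_(i < d) (x ord0 i - y ord0 i) ^+ 2).
Proof. by rewrite /Defs.edist /Defs.enorm; under eq_bigr do rewrite !mxE. Qed.

Lemma edist_ge0 (x y : pt R d) : 0 <= Defs.edist x y.
Proof. by rewrite edistE sqrtr_ge0. Qed.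

Lemma edistC (x y : pt R d) : Defs.edist x y = Defs.edist y x.
Proof.
rewrite !edistE; congr Num.sqrt; apply: eq_bigr => i _.
by rewrite -sqrrN opprB.
Qed.

Lemma edist_sqr (x y : pt R d) :
  Defs.edist x y ^+ 2 = \sum_(i < d) (x ord0 i - y ord0 i) ^+ 2.
Proof. by rewrite edistE sqr_sqrtr// sumr_ge0// => i _; rewrite sqr_ge0. Qed.

Lemma coord_le_edist (x y : pt R d) i : `|x ord0 i - y ord0 i| <= Defs.edist x y.
Proof.
rewrite edistE -sqrtr_sqr ler_wsqrtr// (bigD1 i)//= lerDl sumr_ge0// => j _.
by rewrite sqr_ge0.
Qed.

Lemma medist : measurable_fun [set: T * T] (fun z : T * T => Defs.edist z.1 z.2).
Proof.
under eq_fun do rewrite edistE.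
apply: measurableT_comp; first exact: continuous_measurable_fun (@sqrt_continuous R).
apply: measurable_sum => i; apply: measurable_funX; apply: measurable_funB.
- exact: measurableT_comp (mcoord i) measurable_fst.
- exact: measurableT_comp (mcoord i) measurable_snd.
Qed.

End Geo.

Section Main.
Variables (R : realType) (d : nat) (s eps L : R) (x0 : pt R d).
Hypotheses (s0 : 0 < s) (eps0 : 0 < eps) (L0 : 0 <= L).
Local Notation T := (Rd R d).
Local Notation ed := (@Defs.edist R d).

Definition kk (i : 'I_d) (z : T * T) : R :=
  if eps < ed z.1 z.2 then (z.1 ord0 i - z.2 ord0 i) * ed z.1 z.2 `^ (- (s + 1))
  else 0.

Definition phi (t : R) : R := Num.max (- L) (Num.min t L).
Definition ww (i : 'I_d) (x : T) : R := phi (x ord0 i - x0 ord0 i).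

Lemma pow_key e : 0 < e -> e `^ (- (s + 1)) = (e `^ s)^-1 / e.
Proof.
move=> e0; rewrite powRN powRD; last by apply/implyP => _; rewrite gt_eqF.
by rewrite powRr1 ?ltW// invfM.
Qed.

Lemma kk_bound i z : `|kk i z| <= (eps `^ s)^-1.
Proof.
rewrite /kk; case: ifPn => he; last by rewrite normr0 invr_ge0 powR_ge0.
have e0 : 0 < ed z.1 z.2 by exact: lt_trans he.
rewrite pow_key// normrM normrM normfV (ger0_norm (powR_ge0 _ _)) normfV (gtr0_norm e0).
rewrite mulrCA (@le_trans _ _ ((ed z.1 z.2 `^ s)^-1 * 1))//.
  rewrite ler_wpM2l ?invr_ge0 ?powR_ge0// -/(_ / _) ler_pdivrMr// mul1r.
  exact: coord_le_edist.
rewrite mulr1 lef_pV2 ?posrE ?powR_gt0//.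
by rewrite ge0_ler_powR ?ltW// nnegrE ltW.
Qed.

Lemma good_kk i : good (kk i).
Proof.
split; last by exists (eps `^ s)^-1; exact: kk_bound.
apply: measurable_fun_ifT.
- exact: measurable_fun_ltr (measurable_cst _) (@medist R d).
- apply: measurable_funM.
    apply: measurable_funB.
    + exact: measurableT_comp (mcoord i) measurable_fst.
    + exact: measurableT_comp (mcoord i) measurable_snd.
  exact: measurableT_comp (measurable_powR _) (@medist R d).
- exact: measurable_cst.
Qed.

Lemma kkC i x y : kk i (y, x) = - kk i (x, y).
Proof.
rewrite /kk /= edistC; case: ifPn => _; last by rewrite oppr0.
by rewrite -mulNr opprB.
Qed.

Lemma phi_bound t : `|phi t| <= L.
Proof.
rewrite /phi ler_norml; apply/andP; split; first by rewrite le_max lexx.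
by rewrite ge_max ge_min lexx orbT andbT (le_trans _ L0)// oppr_le0.
Qed.

Lemma phi_id t : `|t| <= L -> phi t = t.
Proof.
move=> /[dup] h; rewrite ler_norml => /andP[h1 h2].
by rewrite /phi (min_idPl h2) (max_idPr h1).
Qed.

Lemma phi_mono a b : a <= b -> phi a <= phi b.
Proof.
by move=> ab; rewrite /phi le_max2// le_min2.
Qed.

Lemma phi_mul a b : 0 <= (a - b) * (phi a - phi b).
Proof.
have [ab|ba] := leP a b.
  by rewrite mulr_le0 ?subr_le0 ?phi_mono.
by rewrite mulr_ge0 ?subr_ge0 ?phi_mono ?ltW.
Qed.

Lemma good_ww i : good (ww i).
Proof.
split; last by exists L => x; exact: phi_bound.
rewrite /ww /phi.
apply: (measurable_maxr (f := fun=> - L)); first exact: measurable_cst.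
apply: (measurable_minr (g := fun=> L)); last exact: measurable_cst.
apply: measurable_funB; first exact: mcoord.
exact: measurable_cst.
Qed.

Definition PP (x y : T) : R := \sum_(i < d) kk i (x, y) * (ww i x - ww i y).

Lemma PP_ge0 (x y : T) : 0 <= PP x y.
Proof.
apply: sumr_ge0 => i _; rewrite /kk /ww /=; case: ifPn => _; last by rewrite mul0r.
rewrite mulrAC mulr_ge0 ?powR_ge0//.
have -> : x ord0 i - y ord0 i = (x ord0 i - x0 ord0 i) - (y ord0 i - x0 ord0 i).
  by rewrite opprB addrA subrK.
exact: phi_mul.
Qed.

Lemma PP_val (x y : T) : (forall i, `|x ord0 i - x0 ord0 i| <= L) ->
  (forall i, `|y ord0 i - x0 ord0 i| <= L) -> eps < ed x y ->
  PP x y = ed x y / ed x y `^ s.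
Proof.
move=> hx hy he; have e0 : 0 < ed x y by exact: lt_trans he.
rewrite /PP; under eq_bigr => i _.
  rewrite /kk /= he /ww !phi_id ?hx ?hy// opprB addrA subrK mulrAC -expr2.
  over.
rewrite -mulr_suml -edist_sqr pow_key// expr2; field.
by rewrite !gt_eqF// powR_gt0.
Qed.

Variable mu : {finite_measure set T -> \bar R}.

Lemma rieszE (x : T) i : riesz_trunc mu s eps x i = \int[mu]_y kk i (x, y).
Proof.
rewrite /riesz_trunc [LHS]Rintegral_mkcond; apply: eq_Rintegral => y _.
rewrite /restrict /kk /=; have [h|h] := boolP (eps < ed x y).
  by rewrite mem_set// powRN.
by case: ifPn => // /set_mem /= h'; rewrite h' in h.
Qed.

Definition FF i (x : T) := \int[mu]_y kk i (x, y).
Definition GG (x : T) := \sum_(i < d) FF i x * ww i x.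
Definition HH (z : T * T) := \sum_(i < d) kk i z * ww i z.1.
Definition SS (x : T) := \sum_(i < d) FF i x ^+ 2.

Lemma good_FF i : good (FF i).
Proof. exact: good_inner (good_kk i). Qed.

Lemma good_ww1 i : good (fun z : T * T => ww i z.1).
Proof.
have [m [M hM]] := good_ww i; split; last by exists M.
exact: measurableT_comp m measurable_fst.
Qed.

Lemma good_HH : good HH.
Proof. by apply: good_sum => i; apply: good_mul; [exact: good_kk|exact: good_ww1]. Qed.

Lemma good_HHs : good (fun z : T * T => HH (z.2, z.1)).
Proof.
have [m [M hM]] := good_HH; split; last by exists M.
exact: (measurableT_comp (f := HH) (g := unstable.swap) m (@measurable_swap _ _ T T)).
Qed.

Lemma good_GG : good GG.
Proof. by apply: good_sum => i; apply: good_mul; [exact: good_FF|exact: good_ww]. Qed.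

Lemma good_SS : good SS.
Proof. by apply: good_sum => i; rewrite /GRing.exp /=; apply: good_mul; exact: good_FF. Qed.

Lemma GG_eq x : GG x = \int[mu]_y HH (x, y).
Proof.
rewrite /HH /= RI_sum; last first.
  by move=> i; apply: good_mul; [exact: good_pair2 (good_kk i)|exact: good_cst].
apply: eq_bigr => i _; rewrite RintegralZr//.
by apply: good_int; [exact: mu_lty|exact: good_pair2 (good_kk i)].
Qed.

Lemma twoG : 2 * \int[mu]_x GG x = \int[mu]_x \int[mu]_y PP x y.
Proof.
under eq_Rintegral do rewrite GG_eq.
rewrite mulr2n mulrDl mul1r.
rewrite {1}(RFubini mu good_HH).
rewrite -RintegralD //; last 2 first.
- by apply: good_int; [exact: mu_lty|exact: good_inner good_HHs].
- by apply: good_int; [exact: mu_lty|exact: good_inner good_HH].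
apply: eq_Rintegral => x _.
rewrite -RintegralD //; last 2 first.
- by apply: good_int; [exact: mu_lty|exact: good_pair2 good_HHs].
- by apply: good_int; [exact: mu_lty|exact: good_pair2 good_HH].
apply: eq_Rintegral => y _.
rewrite /HH /PP /= -big_split /=; apply: eq_bigr => i _.
by rewrite kkC; ring.
Qed.

Lemma good_PP : good (fun z : T * T => PP z.1 z.2).
Proof.
rewrite /PP; apply: good_sum => i; apply: good_mul; first exact: good_kk.
apply: good_add; first exact: good_ww1.
apply: good_opp; have [m [M hM]] := good_ww i; split; last by exists M.
exact: (measurableT_comp (f := ww i) (g := snd) m (@measurable_snd _ _ T T)).
Qed.

Lemma RI_indic (A : set T) : measurable A -> \int[mu]_y \1_A y = fine (mu A).
Proof. by move=> mA; rewrite /Rintegral integral_indic// setIT. Qed.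

Lemma good_indic (A : set T) : measurable A -> good (\1_A : T -> R).
Proof.
move=> mA; split; first exact: measurable_indic.
by exists 1 => x; rewrite /indic; case: (_ \in _); rewrite ?normr1 ?normr0.
Qed.

Lemma PP_lower (Qu Qd : set T) c : measurable Qu -> measurable Qd -> 0 <= c ->
  (forall x y, Qu x -> Qd y -> c <= PP x y) ->
  c * fine (mu Qu) * fine (mu Qd) <= \int[mu]_x \int[mu]_y PP x y.
Proof.
move=> mQu mQd c0 hc.
have g1 : good (fun x : T => c * \1_Qu x * fine (mu Qd)).
  by apply: good_mul; [apply: good_mul; [exact: good_cst|exact: good_indic]|exact: good_cst].
have -> : c * fine (mu Qu) * fine (mu Qd) =
    \int[mu]_x (c * \1_Qu x * fine (mu Qd)).
  rewrite RintegralZr//; last by apply: good_int; [exact: mu_lty|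
    apply: good_mul; [exact: good_cst|exact: good_indic]].
  by rewrite RintegralZl ?RI_indic//; apply: good_int; [exact: mu_lty|exact: good_indic].
apply: le_Rintegral => //.
- by apply: good_int; [exact: mu_lty|exact: g1].
- by apply: good_int; [exact: mu_lty|exact: good_inner good_PP].
move=> x _.
have -> : c * \1_Qu x * fine (mu Qd) = \int[mu]_y (c * \1_Qu x * \1_Qd y).
  by rewrite RintegralZl ?RI_indic//; apply: good_int; [exact: mu_lty|exact: good_indic].
apply: le_Rintegral => //.
- by apply: good_int; [exact: mu_lty|apply: good_mul; [exact: good_cst|exact: good_indic]].
- by apply: good_int; [exact: mu_lty|exact: good_pair2 good_PP].
move=> y _; rewrite /indic.
have [xu|xu] := boolP (x \in Qu); last by rewrite mulr0 mul0r PP_ge0.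
have [yd|yd] := boolP (y \in Qd); last by rewrite mulr0 PP_ge0.
by rewrite !mulr1; apply: hc; exact: set_mem.
Qed.

Lemma CS_step lam : 0 < lam ->
  2 * lam * \int[mu]_x GG x <=
  \int[mu]_x SS x + lam ^+ 2 * L ^+ 2 * d%:R * fine (mu setT).
Proof.
move=> lam0.
rewrite -RintegralZl//; last by apply: good_int; [exact: mu_lty|exact: good_GG].
rewrite -Rintegral_cst// -RintegralD//; last 2 first.
- by apply: good_int; [exact: mu_lty|exact: good_SS].
- by apply: good_int; [exact: mu_lty|exact: good_cst].
apply: le_Rintegral => //.
- by apply: good_int; [exact: mu_lty|apply: good_mul; [exact: good_cst|exact: good_GG]].
- by apply: good_int; [exact: mu_lty|apply: good_add; [exact: good_SS|exact: good_cst]].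
move=> x _; rewrite /GG /SS mulr_sumr.
rewrite (_ : lam ^+ 2 * L ^+ 2 * d%:R = \sum_(i < d) (lam ^+ 2 * L ^+ 2)); last first.
  by rewrite sumr_const card_ord mulr_natr.
rewrite -big_split /=; apply: ler_sum => i _.
have hb : ww i x ^+ 2 <= L ^+ 2.
  by rewrite -real_normK ?num_real// lerXn2r ?nnegrE// phi_bound.
set a := FF i x; set b := ww i x.
have h := sqr_ge0 (a - lam * b).
have h2 : 0 <= lam ^+ 2 * (L ^+ 2 - b ^+ 2) by rewrite mulr_ge0 ?sqr_ge0 ?subr_ge0.
nra.
Qed.

End Main.

Lemma L2_ge (R : realType) d (mu : {finite_measure set (Rd R d) -> \bar R}) s eps :
  0 < eps -> (riesz_trunc_L2sq mu s eps <= riesz_L2sq mu s)%E.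
Proof. by move=> e0; apply: ereal_sup_ubound; exists eps. Qed.

Unset Implicit Arguments.

Theorem lemma8p3 (R : realType) (d : nat) (s c_sep c1 : R) :
  0 < s -> s < d%:R -> 0 < c_sep -> 1 <= c1 ->
  exists2 C : R, 0 < C &
  forall (N : nat -> nat) (Q : nat -> nat -> set (pt R d))
         (par : nat -> nat -> nat)
         (mu : {finite_measure set (Rd R d) -> \bar R}),
    cantor_construction c_sep N Q par ->
    mu (~` cantor_set N Q) = 0%E ->
    (forall k j, (j < N k)%N -> (0 < mu (Q k j))%E) ->
    forall Qu Qd : set (pt R d),
      is_cube N Q Qu -> is_cube N Q Qd ->
      Qu `<=` Q 0%N 0%N -> Qd `<=` Q 0%N 0%N ->
      c1^-1 * diam (Q 0%N 0%N) <= setdist Qu Qd <= c1 * diam (Q 0%N 0%N) ->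
      (mu Qu >= (c1^-1)%:E * mu (Q 0%N 0%N))%E ->
      (mu Qd >= (c1^-1)%:E * mu (Q 0%N 0%N))%E ->
      ((C * Theta mu s (Q 0%N 0%N) ^+ 2 * fine (mu (Q 0%N 0%N)))%:E
         <= riesz_L2sq mu s)%E.
Proof.
move=> s0 sd csep0 c11.
have dR : 0 < d%:R :> R := lt_trans s0 sd.
have c10 : 0 < c1 := lt_le_trans ltr01 c11.
exists (4 * d%:R * c1 ^+ 6)^-1; first by rewrite invr_gt0 !mulr_gt0// exprn_gt0.
move=> N Q par mu [[N0 cQ0] hch hex hdiam hsep] hE hpos Qu Qd.
move=> [ku [ju [hju eQu]]] [kd [jd [hjd eQd]]] sQu sQd /andP[hd1 hd2] hmu hmd.
have closedQ k j : (j < N k)%N -> closed (Q k j).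
  case: k => [|k] hj.
    rewrite N0 in hj; have -> : j = 0%N by case: j hj.
    exact: compact_closed (@norm_hausdorff _ _) cQ0.
  by have [_ ? _] := hch k j hj.
have mQ k j : (j < N k)%N -> measurable (Q k j : set (Rd R d)).
  by move=> h; exact: closed_mRd (closedQ k j h).
have mQ0 : measurable (Q 0%N 0%N : set (Rd R d)) by apply: mQ; rewrite N0.
have mQu : measurable (Qu : set (Rd R d)) by rewrite eQu; exact: mQ.
have mQd : measurable (Qd : set (Rd R d)) by rewrite eQd; exact: mQ.
have muQ0 : (0 < mu (Q 0%N 0%N))%E by apply: hpos; rewrite N0.
set m := fine (mu (Q 0%N 0%N)).
have mE : mu (Q 0%N 0%N) = m%:E by rewrite fineK// fin_num_measure.
have m0 : 0 < m by rewrite -lte_fin -mE.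
have [x0 Qx0] : exists x0, Q 0%N 0%N x0.
  apply/set0P; apply/eqP => h; move: muQ0; rewrite h measure0 ltxx //.
have mEs : measurable (cantor_set N Q : set (Rd R d)).
  rewrite /cantor_set; apply: bigcapT_measurable => k; rewrite bigcup_mkcond.
  apply: bigcupT_measurable => j; case: ifPn => [/set_mem hj|_]; last exact: measurable0.
  exact: mQ.
have EQ0 : cantor_set N Q `<=` Q 0%N 0%N.
  move=> x /(_ 0%N I) [j /= hj Qx]; rewrite N0 in hj.
  have j0 : j = 0%N by case: j hj {Qx} => [|[]].
  by rewrite j0 in Qx.
have nQ0 : mu (~` Q 0%N 0%N) = 0%E.
  apply/eqP; rewrite eq_le measure_ge0 andbT -hE; apply: le_measure; rewrite ?inE.
  - exact: measurableC.
  - exact: measurableC.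
  - by move=> x nx Ex; apply: nx; exact: EQ0.
have mT : fine (mu setT) = m.
  have := measureU mu mQ0 (measurableC mQ0) (setICr _).
  rewrite setUv => ->; rewrite /m; congr fine.
  by rewrite -[RHS]adde0; congr (_ + _)%E; exact: nQ0.
set L := Defs.diam (Q 0%N 0%N).
set Ed := [set Defs.edist x y | x in Q 0%N 0%N & y in Q 0%N 0%N].
have L0 : 0 <= L.
  rewrite /L /Defs.diam -/Ed; have [h|h] := pselect (has_sup Ed); last by rewrite sup_out.
  apply: le_trans (edist_ge0 x0 x0) _; apply: (sup_upper_bound h).
  by exists x0 => //; exists x0.
have [Lz|Lpos] := eqVneq L 0.
  rewrite /Theta -/L Lz powR0 ?gt_eqF// invr0 mulr0 expr0n /= mulr0 mul0r.
  apply: (le_trans _ (@L2_ge _ _ mu s 1 ltr01)).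
  rewrite /riesz_trunc_L2sq integral_ge0// => x _.
  by rewrite lee_fin sumr_ge0// => i _; rewrite sqr_ge0.
have Lp : 0 < L by rewrite lt0r Lpos.
have hsup : has_sup Ed.
  apply: contrapT => h; move: Lpos; rewrite /L /Defs.diam -/Ed sup_out// eqxx //.
have hub x y : Q 0%N 0%N x -> Q 0%N 0%N y -> Defs.edist x y <= L.
  by move=> Qx Qy; apply: (sup_upper_bound hsup); exists x => //; exists y.
set dl := Defs.setdist Qu Qd.
have hlb x y : Qu x -> Qd y -> dl <= Defs.edist x y.
  move=> Qx Qy; apply: ge_inf; last by exists x => //; exists y.
  by exists 0 => _ [a _ [b _ <-]]; exact: edist_ge0.
have dl0 : 0 < dl by apply: lt_le_trans hd1; rewrite mulr_gt0// invr_gt0.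
set eps := dl / 2.
have eps0 : 0 < eps by rewrite divr_gt0.
have hco x : Q 0%N 0%N x -> forall i, `|x ord0 i - x0 ord0 i| <= L.
  by move=> Qx i; apply: le_trans (coord_le_edist x x0 i) (hub x x0 Qx Qx0).
set P := L `^ s.
have P0 : 0 < P by rewrite powR_gt0.
set c := L / c1 / P.
have c0 : 0 <= c by rewrite ltW// !divr_gt0.
have hPP x y : Qu x -> Qd y -> c <= PP s eps L x0 x y.
  move=> Qx Qy; have he := hlb x y Qx Qy.
  have e0 : 0 < Defs.edist x y by exact: lt_le_trans he.
  rewrite (PP_val _ eps0 (hco x (sQu x Qx)) (hco y (sQd y Qy))); last first.
    by apply: lt_le_trans he; rewrite /eps ltr_pdivrMr// ltr_pMr// ltr1n.
  rewrite /c ler_pM//; first by rewrite divr_ge0// ltW.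
  - by rewrite invr_ge0 ltW.
  - by apply: le_trans he; apply: le_trans hd1; rewrite mulrC.
  rewrite lef_pV2 ?posrE ?powR_gt0//.
  rewrite /P ge0_ler_powR ?(ltW s0)// ?nnegrE ?(ltW e0) ?L0//; apply: hub; [exact: sQu|exact: sQd].
set a := fine (mu Qu).
set b := fine (mu Qd).
have ha : c1^-1 * m <= a.
  by rewrite -lee_fin EFinM -mE /a fineK ?fin_num_measure.
have hb : c1^-1 * m <= b.
  by rewrite -lee_fin EFinM -mE /b fineK ?fin_num_measure.
set J := \int[mu]_x GG s eps L x0 mu x.
have hJ : c * a * b <= 2 * J.
  rewrite /J (twoG x0 s0 eps0 L0 mu).
  exact: (PP_lower s0 eps0 L0 mu mQu mQd c0 hPP).
set K := L ^+ 2 * d%:R * m.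
have K0 : 0 < K by rewrite !mulr_gt0// exprn_gt0.
set J0 := c * (c1^-1 * m) * (c1^-1 * m) / 2.
have hJ0 : J0 <= J.
  rewrite /J0 ler_pdivrMr// [J * 2]mulrC; apply: (le_trans _ hJ).
  by rewrite -(mulrA c) -(mulrA c a) ler_wpM2l// ler_pM// mulr_ge0// ?invr_ge0 ltW.
have J00 : 0 < J0 by rewrite /J0 !mulr_gt0// ?invr_gt0// /c !divr_gt0.
set lam := J0 / K.
have lam0 : 0 < lam by rewrite divr_gt0.
have hCS := CS_step x0 s0 eps0 L0 mu lam0.
rewrite mT -/J in hCS.
set RS := \int[mu]_x SS s eps mu x in hCS.
have hRS : J0 ^+ 2 / K <= RS.
  have h1 : 2 * lam * J0 <= 2 * lam * J.
    apply: ler_wpM2l; [apply: mulr_ge0 => //; exact: ltW|exact: hJ0].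
  have h2 : J0 ^+ 2 / K = 2 * lam * J0 - lam ^+ 2 * L ^+ 2 * d%:R * m.
    rewrite /lam /K; field; rewrite !gt_eqF//.
  rewrite h2 lerBlDr; exact: le_trans h1 hCS.
apply: le_trans (@L2_ge _ _ mu s eps eps0).
have -> : riesz_trunc_L2sq mu s eps = RS%:E.
  rewrite /RS /Rintegral fineK; last first.
    apply: integrable_fin_num => //; apply: good_int; first exact: mu_lty.
    exact: good_SS.
  rewrite /riesz_trunc_L2sq; apply: eq_integral => x _; congr EFin.
  by apply: eq_bigr => i _; rewrite rieszE.
rewrite lee_fin (le_trans _ hRS)// /Theta -/m -/L -/P.
rewrite le_eqVlt; apply/orP; left; apply/eqP.
rewrite /J0 /K /c; field.
by rewrite !gt_eqF.
Qed.
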